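(* Let $X$ be a non-empty topological space. The following are equivalent: (1) $X$ is Baire; (2) \textsc{Alice} does not have a winning strategy in $\mathsf{BM}(X)$; (3) \textsc{Alice} does not have a winning strategy in $\mathsf{BM}_\mathrm{fin}(X)$; (4) \textsc{Alice} does not have a winning strategy in $\mathsf{BM}_\omega(X)$.
   Context: A Baire space is a space in which countable intersections of dense open sets are dense. The Banach–Mazur game $\mathsf{BM}(X)$: \textsc{Alice} and \textsc{Bob} alternately choose non-empty open sets $A_0\supseteq B_0\supseteq A_1\supseteq B_1\supseteq\cdots$, \textsc{Alice} starting; \textsc{Bob} wins if $\bigcap_n B_n\neq\emptyset$, otherwise \textsc{Alice} wins. The game $\mathsf{BM}_\mathrm{fin}(X)$: \textsc{Alice} plays a non-empty open set $A_0$; \textsc{Bob} plays a finite collection $\mathcal{B}_0$ of non-empty open subsets of $A_0$; in inning $n+1$, for each $B \in \mathcal{B}_n$ \textsc{Alice} plays a non-empty open set $A_B \subseteq B$, letting $\mathcal{A}_{n+1}=\{A_B : B\in\mathcal{B}_n\}$, and \textsc{Bob} plays a finite collection $\mathcal{B}_{n+1}$ of non-empty open subsets of $\bigcup\mathcal{A}_{n+1}$; \textsc{Bob} wins if $\bigcap_{n}\bigcup\mathcal{B}_n\neq\emptyset$, otherwise \textsc{Alice} wins. The game $\mathsf{BM}_\omega(X)$ is defined identically to $\mathsf{BM}_\mathrm{fin}(X)$ except that each collection $\mathcal{B}_n$ played by \textsc{Bob} is countable instead of finite. *)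

(* Defs.v *)
From HB Require Import structures.
From mathcomp Require Import all_boot all_order all_algebra.
From mathcomp Require Import all_classical all_reals topology.
Set Implicit Arguments. Unset Strict Implicit. Unset Printing Implicit Defensive.
Local Open Scope classical_set_scope.

Definition baire (T : topologicalType) : Prop :=
  forall U : nat -> set T, (forall n, open (U n) /\ dense (U n)) ->
    dense (\bigcap_n U n).

(* ---------------- The Banach--Mazur game BM(X) ----------------
   Alice's strategy: a map from the finite sequence [B_0; ...; B_(n-1)] of
   Bob's previous moves to her move A_n (her own moves are determined by the
   strategy, so this is full information). *)
Section BM.
Variable T : topologicalType.

Definition BM_consistent (sigma : seq (set T) -> set T) (s : seq (set T)) :=
  forall i, (i < size s)%N ->
    [/\ open (nth set0 s i), nth set0 s i !=set0 & nth set0 s i `<=` sigma (take i s)].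

(* sigma always answers legally: a non-empty open set contained in Bob's last
   move (for the empty history, last setT [::] = setT, no constraint). *)
Definition BM_legal (sigma : seq (set T) -> set T) :=
  forall s, BM_consistent sigma s ->
    [/\ open (sigma s), sigma s !=set0 & sigma s `<=` last setT s].

Definition BM_winning (sigma : seq (set T) -> set T) :=
  BM_legal sigma /\
  forall B : nat -> set T, (forall n, BM_consistent sigma (mkseq B n)) ->
    \bigcap_n B n = set0.

Definition Alice_wins_BM : Prop := exists sigma, BM_winning sigma.
End BM.

(* Alice's strategy is a pair (sigma0, sigma): sigma0 = A_0, and
   for a non-empty history h = [B_0; ...; B_n] of Bob's collections and
   B in B_n, sigma h B = A_B. *)
Section BMcoll.
Variable T : topologicalType.
Variable admissible : set (set T) -> Prop.

Definition Alice_coll (sigma0 : set T) (sigma : seq (set (set T)) -> set T -> set T)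
  (h : seq (set (set T))) : set (set T) :=
  match h with
  | [::] => [set sigma0]
  | _ => sigma h @` last set0 h
  end.

Definition Bob_legal (cA cB : set (set T)) :=
  admissible cB /\
  forall B, cB B -> [/\ open B, B !=set0 & B `<=` \bigcup_(A in cA) A].

Definition coll_consistent sigma0 sigma (h : seq (set (set T))) :=
  forall i, (i < size h)%N ->
    Bob_legal (Alice_coll sigma0 sigma (take i h)) (nth set0 h i).

Definition coll_legal sigma0 sigma :=
  forall h, coll_consistent sigma0 sigma h ->
    match h with
    | [::] => open sigma0 /\ sigma0 !=set0
    | _ => forall B, last set0 h B ->
             [/\ open (sigma h B), sigma h B !=set0 & sigma h B `<=` B]
    end.

Definition coll_winning sigma0 sigma :=
  coll_legal sigma0 sigma /\
  forall cB : nat -> set (set T),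
    (forall n, coll_consistent sigma0 sigma (mkseq cB n)) ->
    \bigcap_n (\bigcup_(B in cB n) B) = set0.

Definition Alice_wins_coll : Prop := exists sigma0 sigma, coll_winning sigma0 sigma.
End BMcoll.

Definition Alice_wins_BMfin (T : topologicalType) : Prop :=
  Alice_wins_coll (@finite_set (set T)).
Definition Alice_wins_BMomega (T : topologicalType) : Prop :=
  Alice_wins_coll (@countable (set T)).

(* Main.v *)
Require Import Defs.
From mathcomp Require Import all_boot all_classical topology.
Local Open Scope classical_set_scope.
Set Implicit Arguments. Unset Strict Implicit.

Lemma cons_rcons (T : topologicalType) (sigma : seq (set T) -> set T) q W :
  BM_consistent sigma (rcons q W) <->
  BM_consistent sigma q /\ [/\ open W, W !=set0 & W `<=` sigma q].
Proof.
split.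
- move=> H; split.
  + move=> i Hi; have := H i; rewrite size_rcons nth_rcons Hi -cats1 takel_cat;
      last exact: ltnW.
    by apply; apply: ltnW.
  + have := H (size q); rewrite size_rcons nth_rcons ltnn eqxx -cats1 takel_cat //.
    by rewrite take_size; apply.
- move=> [H [oW nW sW]] i; rewrite size_rcons ltnS leq_eqVlt => /orP[/eqP ->|Hi].
  + by rewrite nth_rcons ltnn eqxx -cats1 takel_cat // take_size.
  + by rewrite nth_rcons Hi -cats1 takel_cat; [exact: H|exact: ltnW].
Qed.

Definition BMInv (T : topologicalType) (sigma : seq (set T) -> set T)
  (P : set (seq (set T))) :=
  [/\ forall p, P p -> BM_consistent sigma p,
      forall p q, P p -> P q -> p <> q -> sigma p `&` sigma q = set0 &
      forall O, open O -> O `&` sigma [::] !=set0 ->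
        exists p, P p /\ O `&` sigma p !=set0].

Definition Ext (T : topologicalType) (sigma : seq (set T) -> set T)
  (P : set (seq (set T))) : set (seq (set T)) :=
  fun q => BM_consistent sigma q /\ exists p W, P p /\ q = rcons p W.

Lemma step (T : topologicalType) (sigma : seq (set T) -> set T) P :
  BM_legal sigma -> BMInv sigma P -> exists Q, BMInv sigma Q /\ Q `<=` Ext sigma P.
Proof.
move=> Hl [Hc Hd Hde].
pose Pr := fun Q : set (seq (set T)) => Q `<=` Ext sigma P /\
   forall p q, Q p -> Q q -> p <> q -> sigma p `&` sigma q = set0.
have [A [[AE Ad] Amax]] : exists A, Pr A /\ forall B, A `<` B -> ~ Pr B.
  apply: Zorn_bigcup => F FP Ftot; split.
    by move=> q [X FX Xq]; exact: (FP X FX).1.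
  move=> p q [X FX Xp] [Y FY Yq] pq.
  have [XY|YX] := Ftot X Y FX FY.
  - exact: (FP Y FY).2 p q (XY _ Xp) Yq pq.
  - exact: (FP X FX).2 p q Xp (YX _ Yq) pq.
exists A; split => //; split.
- by move=> p /AE [].
- exact: Ad.
move=> O oO OA.
have [p [Pp [y [Oy py]]]] := Hde O oO OA.
have [osp nsp _] := Hl p (Hc p Pp).
pose W := O `&` sigma p.
have oW : open W by exact: openI.
have cq : BM_consistent sigma (rcons p W).
  by apply/cons_rcons; split; [exact: Hc|split => //; [exists y|move=> z []]].
have [osq [z sqz] sqW] := Hl _ cq.
rewrite last_rcons in sqW.
suff [q' [Aq' [w [w1 w2]]]] : exists q', A q' /\ sigma (rcons p W) `&` sigma q' !=set0.
  by exists q'; split => //; exists w; split => //; exact: (sqW _ w1).1.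
apply: contrapT => Hn.
have nA : ~ A (rcons p W).
  by move=> Aq; apply: Hn; exists (rcons p W); split => //; exists z.
apply: (Amax (A `|` [set rcons p W])).
  split; first by move=> u Au; left.
  by move=> H; apply: nA; apply: H; right.
split.
  move=> u [/AE //|->]; split => //; exists p, W; split => //.
have Hdisj : forall u, A u -> sigma (rcons p W) `&` sigma u = set0.
  move=> u Au; apply/seteqP; split => // w [w1 w2]; apply: Hn.
  by exists u; split => //; exists w.
move=> u v [Au|->] [Av|->] uv.
- exact: Ad.
- by rewrite setIC; exact: Hdisj.
- exact: Hdisj.
- by [].
Qed.

Lemma baire_noBM (T : topologicalType) : baire T -> ~ Alice_wins_BM T.
Proof.
move=> HB [sigma [Hl Hw]].
have [f Hf] : exists f : set (seq (set T)) -> set (seq (set T)),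
    forall P, BMInv sigma P -> BMInv sigma (f P) /\ f P `<=` Ext sigma P.
  have H : forall P, exists Q, BMInv sigma P -> BMInv sigma Q /\ Q `<=` Ext sigma P.
    move=> P; have [HP|HP] := pselect (BMInv sigma P).
      by have [Q HQ] := step Hl HP; exists Q.
    by exists set0.
  by have [g Hg] := choice H; exists g.
pose Pn n := iter n f [set [::]].
have Inv0 : BMInv sigma [set [::]].
  split.
  - by move=> p -> i.
  - by move=> p q -> ->.
  - by move=> O _ H; exists [::].
have InvP : forall n, BMInv sigma (Pn n).
  elim=> [|n IH] //=; exact: (Hf _ IH).1.
have ExtP : forall n, Pn n.+1 `<=` Ext sigma (Pn n).
  by move=> n; exact: (Hf _ (InvP n)).2.
have [oA0 nA0 _] := Hl [::] (fun i (H : (i < 0)%N) => False_rect _ (notF H)).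
pose A0 := sigma [::].
pose V n := (\bigcup_(p in Pn n) sigma p) `|` ~` closure A0.
have HV : forall n, open (V n) /\ dense (V n).
  move=> n; have [Hc Hd Hde] := InvP n; split.
    apply: openU; last exact/closed_openC/closed_closure.
    by apply: bigcup_open => p Pp; have [] := Hl p (Hc p Pp).
  move=> O [y Oy] oO.
  have [OA|OA] := pselect (O `&` A0 !=set0).
    have [p [Pp [w [Ow pw]]]] := Hde O oO OA.
    by exists w; split => //; left; exists p.
  exists y; split => //; right => cy.
  have /cy [w [A0w Ow]] : nbhs y O by apply: open_nbhs_nbhs.
  by apply: OA; exists w.
have [x [A0x Vx]] := HB V HV A0 nA0 oA0.
have Ux : forall n, exists p, Pn n p /\ sigma p x.
  move=> n; have [[p Pp px]|] := Vx n I; first by exists p.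
  by move=> /(_ (@subset_closure _ A0 x A0x)).
have [pf Hpf] := choice Ux.
have uniq : forall n p, Pn n p -> sigma p x -> p = pf n.
  move=> n p Pp px; apply: contrapT => Hne.
  have [_ Hd _] := InvP n.
  have := Hd _ _ Pp (Hpf n).1 Hne.
  by move/seteqP => [/(_ x) H _]; apply: H; split => //; exact: (Hpf n).2.
have Hstep : forall n, exists W, pf n.+1 = rcons (pf n) W /\ W x.
  move=> n; have [cq [p [W [Pp eq]]]] := ExtP n _ (Hpf n.+1).1.
  have [_ _ sl] := Hl _ cq.
  have xW : W x by have := sl x (Hpf n.+1).2; rewrite eq last_rcons.
  move: cq; rewrite eq => /cons_rcons [cp [_ _ Wp]].
  have := uniq n p Pp (Wp x xW) => ep.
  by exists W; rewrite -ep.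
pose B n := last setT (pf n.+1).
have mk : forall n, mkseq B n = pf n.
  elim=> [|n IH].
    by have := (Hpf 0).1; rewrite /Pn /= => ->.
  rewrite mkseqS IH /B; have [W [-> _]] := Hstep n.
  by rewrite last_rcons.
have := Hw B.
have -> : \bigcap_n B n = set0 <-> False.
  split => // /seteqP [/(_ x) H _]; apply: H => n _.
  rewrite /B; have [W [-> xW]] := Hstep n; by rewrite last_rcons.
apply => n; rewrite mk; have [Hc _ _] := InvP n; exact: Hc _ (Hpf n).1.
Qed.

Lemma take_mkseq' (X : Type) (f : nat -> X) m n : (m <= n)%N ->
  take m (mkseq f n) = mkseq f m.
Proof. by move=> H; rewrite /mkseq -map_take take_iota (minn_idPl H). Qed.

Lemma Alice_coll_rcons (T : topologicalType) s0 sg (h : seq (set (set T))) c :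
  Alice_coll s0 sg (rcons h c) = sg (rcons h c) @` c.
Proof. by case: h => [|a h] //=; rewrite last_rcons. Qed.

Lemma omega_fin (T : topologicalType) : Alice_wins_BMomega T -> Alice_wins_BMfin T.
Proof.
move=> [s0 [sg [Hl Hw]]]; exists s0, sg.
have cc : forall h, coll_consistent (@finite_set (set T)) s0 sg h ->
                    coll_consistent (@countable (set T)) s0 sg h.
  move=> h H i Hi; have [fin Hb] := H i Hi; split => //.
  exact: finite_set_countable.
split; last by move=> cB HcB; apply: Hw => n; apply: cc.
by move=> h /cc /Hl.
Qed.

Lemma notbaire_omega (T : topologicalType) : ~ baire T -> Alice_wins_BMomega T.
Proof.
move=> /existsNP [U /not_implyP [HU /denseNE [O [[y [oO Oy]] OU]]]].
exists O, (fun h B => B `&` U (size h).-1); split.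
  case=> [|B0 h] Hc; first by split => //; exists y.
  move=> B Bl.
  have := Hc (size h) (ltnSn _).
  rewrite (_ : nth set0 (B0 :: h) (size h) = last set0 (B0 :: h)); last first.
    by rewrite (last_nth set0).
  move=> [_ /(_ B Bl) [oB nB _]].
  split; [apply: openI => //; exact: (HU _).1| |by move=> z []].
  exact: (HU _).2.
move=> cB Hc.
have sub : forall n, \bigcup_(B in cB n.+1) B `<=` U n.
  move=> n z [B Bn Bz].
  have := Hc n.+2 n.+1; rewrite size_mkseq => /(_ (leqnn _)) [_ /(_ B)].
  rewrite nth_mkseq // take_mkseq' // => /(_ Bn) [_ _ /(_ z Bz)].
  rewrite mkseqS /=.
  rewrite Alice_coll_rcons size_rcons size_mkseq /=.
  by move=> [A [B' _ <-] []].
have sub0 : \bigcup_(B in cB 0) B `<=` O.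
  move=> z [B Bn Bz].
  have := Hc 1%N 0%N isT => [[_ /(_ B Bn) [_ _ /(_ z Bz)]]] /=.
  by move=> [A -> ].
apply/seteqP; split => // z Hz.
have := OU; move/seteqP => [/(_ z) H _]; apply: H; split.
  by apply: sub0; exact: Hz 0%N I.
by move=> n _; apply: sub; exact: Hz n.+1 I.
Qed.

Lemma fin_BM (T : topologicalType) : Alice_wins_BMfin T -> Alice_wins_BM T.
Proof.
move=> [s0 [sg [Hl Hw]]].
pose single (s : seq (set T)) := map (fun B => [set B]) s.
pose tau (s : seq (set T)) := if s is [::] then s0 else sg (single s) (last set0 s).
have U : forall s, \bigcup_(A in Alice_coll s0 sg (single s)) A = tau s.
  case/lastP => [|s b].
    by apply/seteqP; split => [z [A -> //]|z z0]; exists s0.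
  rewrite /single map_rcons Alice_coll_rcons -map_rcons.
  have -> : tau (rcons s b) = sg (single (rcons s b)) b.
    by case: s => [|a s] //=; rewrite last_rcons.
  apply/seteqP; split => [z [A [B -> <-] //]|z z0].
  by exists (sg (single (rcons s b)) b) => //; exists b.
have cons : forall s, BM_consistent tau s -> coll_consistent (@finite_set (set T)) s0 sg (single s).
  move=> s Hs i; rewrite size_map => Hi; split.
    by rewrite (nth_map set0) //; exact: finite_set1.
  move=> B; rewrite (nth_map set0) // => ->.
  by rewrite /single -map_take U; exact: Hs.
exists tau; split.
  move=> s /cons /Hl; case: s => [|b s] /=; first by case.
  by move=> /(_ (last b s)); rewrite /single (last_map (fun B => [set B])); apply.
move=> B HB; have := Hw (fun n => [set B n]).
have -> : \bigcap_n \bigcup_(B0 in [set B n]) B0 = \bigcap_n B n.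
  apply/seteqP; split => z Hz n _.
    by have [A -> ] := Hz n I.
  by exists (B n) => //; exact: Hz.
apply => n.
have -> : mkseq (fun n => [set B n]) n = single (mkseq B n).
  by rewrite /single /mkseq -map_comp.
exact: cons.
Qed.

Unset Implicit Arguments.

Theorem corollary3p3 (T : topologicalType) (HT : [set: T] !=set0) :
  [<-> baire T; ~ Alice_wins_BM T; ~ Alice_wins_BMfin T; ~ Alice_wins_BMomega T].
Proof.
tfae.
- exact: baire_noBM.
- by move=> H /fin_BM.
- by move=> H /omega_fin.
- by move=> H; apply: contrapT => /notbaire_omega.
Qed.
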